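(* Let $M,N$ be complete pointed metric spaces and $f\colon M\to N$ a Lipschitz map with $f(0_M)=0_N$. Let $(x_n,y_n)_n$ be a sequence in $M\times M$ with $x_n\neq y_n$ for all $n$, and put $$m_n=\frac{\delta(f(x_n))-\delta(f(y_n))}{d(x_n,y_n)}\in\mathcal F(N).$$ Assume that $(m_n)_n$ converges weakly to some $\gamma\in\mathcal F(N)$. Then: (1) if $d(x_n,y_n)\to0$, then $\gamma=0$; (2) if $d(x_n,y_n)\to+\infty$, then $\gamma=0$; (3) if there exists $\alpha>0$ with $d(x_n,y_n)\ge\alpha$ for all $n$, and $\gamma\neq0$, then the sequence $(d(x_n,y_n))_n$ is bounded and $(f(x_n),f(y_n))_n$ has an accumulation point in $N\times N$.
   Context: Scalars are $\mathbb K=\mathbb R$ or $\mathbb C$. For a pointed metric space $(M,d,0_M)$, $\mathrm{Lip}_0(M)$ denotes the Banach space of Lipschitz functions $g\colon M\to\mathbb K$ with $g(0_M)=0$ normed by the best Lipschitz constant; $\delta(x)\in\mathrm{Lip}_0(M)^*$ is evaluation at $x$; the Lipschitz-free space $\mathcal F(M)$ is the norm-closed linear span of $\{\delta(x):x\in M\}$ in $\mathrm{Lip}_0(M)^*$, with dual $\mathrm{Lip}_0(M)$ (weak convergence in $\mathcal F(N)$ is with respect to this duality). *)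

(* Defs.v *)
From Stdlib Require Import Reals List.
From Coquelicot Require Import Coquelicot.
Open Scope R_scope.

(* Scalars: K = C if cplx = true, K = R (embedded in C as Im = 0) otherwise. *)
Definition in_K (cplx : bool) (z : C) : Prop := cplx = true \/ Im z = 0.

Definition is_metric {M : Type} (d : M -> M -> R) : Prop :=
  (forall x y, d x y = 0 <-> x = y) /\
  (forall x y, d x y = d y x) /\
  (forall x y z, d x z <= d x y + d y z).

Definition complete_metric {M : Type} (d : M -> M -> R) : Prop :=
  forall u : nat -> M,
    (forall eps, 0 < eps -> exists N, forall m n, (N <= m)%nat -> (N <= n)%nat ->
        d (u m) (u n) < eps) ->
    exists l, is_lim_seq (fun n => d (u n) l) 0.

Definition lipschitz_map {M N : Type} (dM : M -> M -> R) (dN : N -> N -> R)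
  (f : M -> N) : Prop :=
  exists L, forall a b, dN (f a) (f b) <= L * dM a b.

Definition Lip0 (cplx : bool) {N : Type} (d : N -> N -> R) (z : N) (g : N -> C) : Prop :=
  (forall x, in_K cplx (g x)) /\
  (exists L, forall x y, Cmod (Cminus (g x) (g y)) <= L * d x y) /\
  g z = RtoC 0.

Definition lip_le1 {N : Type} (d : N -> N -> R) (g : N -> C) : Prop :=
  forall x y, Cmod (Cminus (g x) (g y)) <= d x y.

(* Evaluation of the finite combination sum_i a_i delta(x_i) at g. *)
Definition eval_comb {N : Type} (l : list (C * N)) (g : N -> C) : C :=
  fold_right (fun p acc => Cplus (Cmult (fst p) (g (snd p))) acc) (RtoC 0) l.

(* gamma : Lip_0(N) -> K belongs to F(N): it is K-linear on Lip_0(N), and lies in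
   the dual-norm closure of span{delta(x) : x in N}. *)
Definition in_free (cplx : bool) {N : Type} (d : N -> N -> R) (z : N)
  (gamma : (N -> C) -> C) : Prop :=
  (forall g, Lip0 cplx d z g -> in_K cplx (gamma g)) /\
  (forall g h, Lip0 cplx d z g -> Lip0 cplx d z h ->
     gamma (fun x => Cplus (g x) (h x)) = Cplus (gamma g) (gamma h)) /\
  (forall a g, in_K cplx a -> Lip0 cplx d z g ->
     gamma (fun x => Cmult a (g x)) = Cmult a (gamma g)) /\
  (forall eps, 0 < eps -> exists l : list (C * N),
     List.Forall (fun p => in_K cplx (fst p)) l /\
     forall g, Lip0 cplx d z g -> lip_le1 d g ->
       Cmod (Cminus (gamma g) (eval_comb l g)) <= eps).

Definition molecule {M N : Type} (dM : M -> M -> R) (f : M -> N) (x y : M)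
  (g : N -> C) : C :=
  Cmult (RtoC (/ dM x y)) (Cminus (g (f x)) (g (f y))).

Definition weak_cvg (cplx : bool) {N : Type} (d : N -> N -> R) (z : N)
  (m : nat -> (N -> C) -> C) (gamma : (N -> C) -> C) : Prop :=
  forall g, Lip0 cplx d z g -> is_lim_seq (fun n => Cmod (Cminus (m n g) (gamma g))) 0.

Definition free_zero (cplx : bool) {N : Type} (d : N -> N -> R) (z : N)
  (gamma : (N -> C) -> C) : Prop :=
  forall g, Lip0 cplx d z g -> gamma g = RtoC 0.

(* Main.v *)
Require Import Defs.
From Stdlib Require Import Reals List.
From Coquelicot Require Import Coquelicot.
From Stdlib Require Import Lra Lia Classical ClassicalEpsilon FunctionalExtensionality.
Open Scope R_scope.

Definition freq (P : nat -> Prop) := forall n0, exists n, (n0 <= n)%nat /\ P n.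

Lemma cvC (m : nat -> C) a : is_lim_seq (fun n => Cmod (Cminus (m n) a)) 0 ->
  forall eps, 0 < eps -> exists N, forall n, (N <= n)%nat -> Cmod (Cminus (m n) a) < eps.
Proof.
  intros H eps He. apply is_lim_seq_spec in H. destruct (H (mkposreal eps He)) as [N HN].
  exists N. intros n Hn. specialize (HN n Hn). simpl in HN.
  rewrite Rminus_0_r, Rabs_pos_eq in HN by apply Cmod_ge_0. exact HN.
Qed.

Lemma Cmod_sub_tri (a b u : C) : Cmod (Cminus a b) <= Cmod (Cminus a u) + Cmod (Cminus u b).
Proof.
  replace (Cminus a b) with (Cplus (Cminus a u) (Cminus u b)) by (unfold Cminus; ring).
  apply Cmod_triangle.
Qed.

Lemma Cmod_sub_sym (a b : C) : Cmod (Cminus a b) = Cmod (Cminus b a).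
Proof.
  replace (Cminus a b) with (Copp (Cminus b a)) by (unfold Cminus; ring).
  apply Cmod_opp.
Qed.

Lemma Cmod_small_eq (a b : C) : (forall eps, 0 < eps -> Cmod (Cminus a b) <= eps) -> a = b.
Proof.
  intros H.
  assert (Cmod (Cminus a b) = 0).
  { apply Rle_antisym; [|apply Cmod_ge_0].
    destruct (Rle_or_lt (Cmod (Cminus a b)) 0) as [h|h]; [exact h|].
    specialize (H (Cmod (Cminus a b) / 2) ltac:(lra)). lra. }
  apply Cmod_eq_0 in H0.
  replace a with (Cplus (Cminus a b) b) by (unfold Cminus; ring). rewrite H0. ring.
Qed.

Lemma freq_eq_lim (u v : nat -> C) a b :
  is_lim_seq (fun n => Cmod (Cminus (u n) a)) 0 ->
  is_lim_seq (fun n => Cmod (Cminus (v n) b)) 0 ->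
  freq (fun n => u n = v n) -> a = b.
Proof.
  intros Hu Hv Hf. apply Cmod_small_eq. intros eps He.
  destruct (cvC _ _ Hu (eps/2)) as [N1 H1]; [lra|].
  destruct (cvC _ _ Hv (eps/2)) as [N2 H2]; [lra|].
  destruct (Hf (N1 + N2)%nat) as [n [Hn E]].
  specialize (H1 n ltac:(lia)). specialize (H2 n ltac:(lia)).
  rewrite E in H1.
  pose proof (Cmod_sub_tri a b (v n)). rewrite Cmod_sub_sym in H1. lra.
Qed.

Lemma freq_small_lim (u : nat -> C) a :
  is_lim_seq (fun n => Cmod (Cminus (u n) a)) 0 ->
  (forall eta, 0 < eta -> freq (fun n => Cmod (u n) < eta)) -> a = RtoC 0.
Proof.
  intros Hu Hf. apply Cmod_small_eq. intros eps He.
  destruct (cvC _ _ Hu (eps/2)) as [N1 H1]; [lra|].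
  destruct (Hf (eps/2) ltac:(lra) N1) as [n [Hn E]].
  specialize (H1 n Hn).
  pose proof (Cmod_sub_tri a (RtoC 0) (u n)). rewrite Cmod_sub_sym in H1.
  replace (Cminus (u n) (RtoC 0)) with (u n) in H by (unfold Cminus; ring). lra.
Qed.

Lemma RtoC_minus (a b : R) : Cminus (RtoC a) (RtoC b) = RtoC (a - b).
Proof. apply injective_projections; simpl; ring. Qed.

Lemma Cmod_RtoC_minus (a b : R) : Cmod (Cminus (RtoC a) (RtoC b)) = Rabs (a - b).
Proof. rewrite RtoC_minus. apply Cmod_R. Qed.

Lemma im_le_Cmod (c : C) : Rabs (Im c) <= Cmod c.
Proof.
  destruct c as [r i]. unfold Cmod, Im; simpl.
  rewrite <- sqrt_Rsqr_abs. apply sqrt_le_1_alt. unfold Rsqr.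
  pose proof (pow2_ge_0 r). nra.
Qed.

Lemma Lip0_real (cplx : bool) {N : Type} (d : N -> N -> R) (z : N) (G : N -> R) :
  G z = 0 -> (forall a b, Rabs (G a - G b) <= d a b) ->
  Lip0 cplx d z (fun w => RtoC (G w)) /\ lip_le1 d (fun w => RtoC (G w)).
Proof.
  intros Hz HG. split; [split; [|split]|].
  - intros w. right. reflexivity.
  - exists 1. intros a b. rewrite Cmod_RtoC_minus. rewrite Rmult_1_l. apply HG.
  - rewrite Hz. reflexivity.
  - intros a b. rewrite Cmod_RtoC_minus. apply HG.
Qed.

Lemma gamma_zero (cplx : bool) {N : Type} (d : N -> N -> R) (z : N) gamma :
  in_free cplx d z gamma -> gamma (fun _ => RtoC 0) = RtoC 0.
Proof.
  intros [_ [_ [Hh _]]].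
  assert (HL : Lip0 cplx d z (fun _ => RtoC 0)).
  { split; [|split]. intros; right; reflexivity. exists 0. intros a b.
    replace (Cminus (RtoC 0) (RtoC 0)) with (RtoC 0) by (apply injective_projections; simpl; ring).
    rewrite Cmod_0. lra. reflexivity. }
  specialize (Hh (RtoC 0) _ (or_intror eq_refl) HL).
  transitivity (gamma (fun x : N => Cmult (RtoC 0) ((fun _ : N => RtoC 0) x))).
  { f_equal. apply functional_extensionality; intros; apply injective_projections; simpl; ring. }
  rewrite Hh. apply injective_projections; simpl; ring.
Qed.

Lemma eval_comb_ext {N : Type} (l : list (C * N)) h1 h2 :
  (forall p, In p l -> h1 (snd p) = h2 (snd p)) -> eval_comb l h1 = eval_comb l h2.
Proof.
  induction l as [|p l IH]; intros H; simpl. reflexivity.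
  rewrite (H p (or_introl eq_refl)). rewrite IH. reflexivity.
  intros q Hq. apply H. right; exact Hq.
Qed.

Lemma approx (cplx : bool) {N : Type} (d : N -> N -> R) (z : N) gamma :
  in_free cplx d z gamma -> forall eps, 0 < eps -> exists l : list (C * N),
  forall h1 h2, Lip0 cplx d z h1 -> lip_le1 d h1 -> Lip0 cplx d z h2 -> lip_le1 d h2 ->
    (forall p, In p l -> h1 (snd p) = h2 (snd p)) ->
    Cmod (Cminus (gamma h1) (gamma h2)) <= 2 * eps.
Proof.
  intros Hg eps He. destruct Hg as [_ [_ [_ Ha]]]. destruct (Ha eps He) as [l [_ Hl]].
  exists l. intros h1 h2 L1 l1 L2 l2 E.
  pose proof (Hl h1 L1 l1). pose proof (Hl h2 L2 l2).
  rewrite (eval_comb_ext l h1 h2 E) in H.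
  pose proof (Cmod_sub_tri (gamma h1) (gamma h2) (eval_comb l h2)).
  rewrite (Cmod_sub_sym (eval_comb l h2)) in H1. lra.
Qed.

Lemma reduce (cplx : bool) {N : Type} (d : N -> N -> R) (z : N) gamma :
  (forall a b, 0 <= d a b) -> in_free cplx d z gamma ->
  (forall G : N -> R, G z = 0 -> (forall a b, Rabs (G a - G b) <= d a b) ->
     gamma (fun w => RtoC (G w)) = RtoC 0) ->
  free_zero cplx d z gamma.
Proof.
  intros Hd Hg HG g [HK [[L HL] Hz]].
  set (L' := Rabs L + 1).
  assert (HL' : 0 < L') by (unfold L'; pose proof (Rabs_pos L); lra).
  assert (HLd : forall a b, L * d a b <= L' * d a b).
  { intros a b. apply Rmult_le_compat_r. apply Hd. unfold L'. pose proof (Rle_abs L). lra. }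
  set (Gr := fun w => Re (g w) / L'). set (Gi := fun w => Im (g w) / L').
  assert (HGr : forall a b, Rabs (Gr a - Gr b) <= d a b).
  { intros a b. unfold Gr. replace (Re (g a) / L' - Re (g b) / L') with (Re (Cminus (g a) (g b)) / L')
      by (unfold Re, Cminus, Cplus, Copp; simpl; field; lra).
    unfold Rdiv. rewrite Rabs_mult, Rabs_inv, (Rabs_pos_eq L') by lra.
    apply (Rmult_le_reg_r L'); [lra|]. rewrite Rmult_assoc, Rinv_l, Rmult_1_r by lra.
    pose proof (re_le_Cmod (Cminus (g a) (g b))). pose proof (HL a b). pose proof (HLd a b). nra. }
  assert (HGi : forall a b, Rabs (Gi a - Gi b) <= d a b).
  { intros a b. unfold Gi. replace (Im (g a) / L' - Im (g b) / L') with (Im (Cminus (g a) (g b)) / L')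
      by (unfold Im, Cminus, Cplus, Copp; simpl; field; lra).
    unfold Rdiv. rewrite Rabs_mult, Rabs_inv, (Rabs_pos_eq L') by lra.
    apply (Rmult_le_reg_r L'); [lra|]. rewrite Rmult_assoc, Rinv_l, Rmult_1_r by lra.
    pose proof (im_le_Cmod (Cminus (g a) (g b))). pose proof (HL a b). pose proof (HLd a b). nra. }
  assert (Gr0 : Gr z = 0) by (unfold Gr; rewrite Hz; simpl; field; lra).
  assert (Gi0 : Gi z = 0) by (unfold Gi; rewrite Hz; simpl; field; lra).
  destruct (Lip0_real cplx d z Gr Gr0 HGr) as [LGr _].
  destruct (Lip0_real cplx d z Gi Gi0 HGi) as [LGi _].
  pose proof (HG Gr Gr0 HGr) as ER. pose proof (HG Gi Gi0 HGi) as EI.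
  destruct Hg as [_ [Hadd [Hhom _]]].
  destruct cplx.
  - assert (LC : Lip0 true d z (fun w => Cmult Ci (RtoC (Gi w)))).
    { split; [|split]. intros; left; reflexivity.
      exists 1. intros a b. replace (Cminus (Cmult Ci (RtoC (Gi a))) (Cmult Ci (RtoC (Gi b))))
        with (Cmult Ci (Cminus (RtoC (Gi a)) (RtoC (Gi b)))) by (unfold Cminus; ring).
      rewrite Cmod_mult, Cmod_RtoC_minus, Cmod_Ci. rewrite !Rmult_1_l. apply HGi.
      rewrite Gi0. apply injective_projections; simpl; ring. }
    assert (LS : Lip0 true d z (fun w => Cplus (RtoC (Gr w)) (Cmult Ci (RtoC (Gi w))))).
    { split; [|split]. intros; left; reflexivity.
      exists 2. intros a b.
      replace (Cminus (Cplus (RtoC (Gr a)) (Cmult Ci (RtoC (Gi a)))) (Cplus (RtoC (Gr b)) (Cmult Ci (RtoC (Gi b)))))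
        with (Cplus (Cminus (RtoC (Gr a)) (RtoC (Gr b))) (Cmult Ci (Cminus (RtoC (Gi a)) (RtoC (Gi b))))) by (unfold Cminus; ring).
      eapply Rle_trans. apply Cmod_triangle. rewrite Cmod_mult, !Cmod_RtoC_minus, Cmod_Ci.
      pose proof (HGr a b). pose proof (HGi a b). lra.
      rewrite Gr0, Gi0. apply injective_projections; simpl; ring. }
    replace g with (fun w => Cmult (RtoC L') (Cplus (RtoC (Gr w)) (Cmult Ci (RtoC (Gi w))))).
    2:{ apply functional_extensionality; intro w. unfold Gr, Gi. destruct (g w) as [r i].
        apply injective_projections; simpl; field; lra. }
    rewrite Hhom by (auto; right; reflexivity).
    rewrite Hadd by auto. rewrite Hhom by (auto; left; reflexivity).
    rewrite ER, EI. apply injective_projections; simpl; ring.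
  - replace g with (fun w => Cmult (RtoC L') (RtoC (Gr w))).
    2:{ apply functional_extensionality; intro w. unfold Gr.
        destruct (HK w) as [F|Hi]; [discriminate|]. destruct (g w) as [r i]. simpl in Hi. subst i.
        apply injective_projections; simpl; field; lra. }
    rewrite Hhom by (auto; right; reflexivity). rewrite ER. apply injective_projections; simpl; ring.
Qed.

Definition clamp (c t : R) : R := Rmax (- c) (Rmin t c).

Ltac crush := unfold clamp, Rmax, Rmin, Rabs in *; repeat (destruct Rle_dec || destruct Rcase_abs); lra.

Lemma clamp_lip c t u : 0 <= c -> Rabs (clamp c t - clamp c u) <= Rabs (t - u).
Proof. intros; crush. Qed.
Lemma clamp_id c t : Rabs t <= c -> clamp c t = t.
Proof. intros; crush. Qed.
Lemma clamp_bound c t : 0 <= c -> Rabs (clamp c t) <= c.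
Proof. intros; crush. Qed.

Definition psi (r t : R) : R := 2 * clamp r t - clamp (2 * r) t.
Lemma psi_lip r t u : 0 < r -> Rabs (psi r t - psi r u) <= Rabs (t - u).
Proof. intros; unfold psi; crush. Qed.
Lemma psi_id r t : 0 < r -> Rabs t <= r -> psi r t = t.
Proof. intros; unfold psi; crush. Qed.
Lemma psi_zero r t : 0 < r -> 2 * r <= Rabs t -> psi r t = 0.
Proof. intros; unfold psi; crush. Qed.

Definition phiinf (R0 t : R) : R := t - clamp R0 t.
Lemma phiinf_lip R0 t u : 0 <= R0 -> Rabs (phiinf R0 t - phiinf R0 u) <= Rabs (t - u).
Proof. intros; unfold phiinf; crush. Qed.
Lemma phiinf_zero R0 t : Rabs t <= R0 -> phiinf R0 t = 0.
Proof. intros; unfold phiinf; crush. Qed.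
Lemma phiinf_diff R0 t u : 0 <= R0 -> ((R0 < t /\ R0 < u) \/ (t < - R0 /\ u < - R0)) ->
  phiinf R0 t - phiinf R0 u = t - u.
Proof. intros; unfold phiinf; crush. Qed.

Lemma list_bound (F : list R) : exists R0, 0 <= R0 /\ forall t, In t F -> Rabs t <= R0.
Proof.
  induction F as [|a F [R0 [H0 H]]]. exists 0; split; [lra|intros t []].
  exists (Rmax R0 (Rabs a)). split. eapply Rle_trans; [exact H0|apply Rmax_l].
  intros t [<-|Ht]. apply Rmax_r. eapply Rle_trans; [apply H, Ht|apply Rmax_l].
Qed.

Lemma list_sep (F : list R) s : exists r, 0 < r /\ forall t, In t F -> t = s \/ 2 * r <= Rabs (t - s).
Proof.
  induction F as [|a F [r [H0 H]]]. exists 1; split; [lra|intros t []].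
  destruct (Req_dec a s) as [E|E].
  - exists r. split; auto. intros t [<-|Ht]; auto.
  - assert (0 < Rabs (a - s)) by (apply Rabs_pos_lt; lra).
    exists (Rmin r (Rabs (a - s) / 2)). split. apply Rmin_glb_lt; lra.
    intros t [<-|Ht]. right. pose proof (Rmin_r r (Rabs (a - s) / 2)). lra.
    destruct (H t Ht) as [|H2]; auto. right. pose proof (Rmin_l r (Rabs (a - s) / 2)). lra.
Qed.

Lemma phi_exists (F : list R) (a b : nat -> R) : In 0 F ->
  (forall eta, 0 < eta -> exists N, forall n, (N <= n)%nat -> Rabs (a n - b n) < eta) ->
  exists phi : R -> R, (forall t u, Rabs (phi t - phi u) <= Rabs (t - u)) /\
    (forall t, In t F -> phi t = 0) /\ freq (fun n => phi (a n) - phi (b n) = a n - b n).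
Proof.
  intros H0 Hab.
  destruct (classic (exists K, freq (fun n => Rabs (a n) <= K))) as [[K HK]|HK].
  - set (sg := fun n => epsilon (inhabits 0%nat) (fun m => (n <= m)%nat /\ Rabs (a m) <= K)).
    assert (Hsg : forall n, (n <= sg n)%nat /\ Rabs (a (sg n)) <= K).
    { intros n. unfold sg. apply epsilon_spec. destruct (HK n) as [m Hm]. exists m; exact Hm. }
    destruct (Bolzano_Weierstrass (fun n => a (sg n)) (fun c => -K <= c <= K) (compact_P3 _ _)) as [s Hs].
    { intros n. destruct (Hsg n) as [_ Hn]. unfold Rabs in Hn. destruct Rcase_abs; lra. }
    destruct (list_sep F s) as [r [Hr HF]].
    exists (fun t => psi r (t - s)). split; [|split].
    + intros t u. replace (t - u) with ((t - s) - (u - s)) by ring. apply psi_lip; auto.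
    + intros t Ht. destruct (HF t Ht) as [->|Hd]. rewrite Rminus_diag. apply psi_id; auto.
      rewrite Rabs_R0; lra. apply psi_zero; auto.
    + intros n0. destruct (Hab (r/2) ltac:(lra)) as [N1 HN1].
      destruct (Hs (disc s (mkposreal (r/2) ltac:(lra))) (n0 + N1)%nat) as [p [Hp Hv]].
      { exists (mkposreal (r/2) ltac:(lra)). intros y Hy; exact Hy. }
      destruct (Hsg p) as [Hp2 _]. exists (sg p). split; [lia|].
      unfold disc in Hv; simpl in Hv. specialize (HN1 (sg p) ltac:(lia)).
      rewrite !psi_id; auto; [ring| |].
      * replace (b (sg p) - s) with ((a (sg p) - s) - (a (sg p) - b (sg p))) by ring.
        eapply Rle_trans; [apply Rabs_triang|]. rewrite Rabs_Ropp. lra.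
      * lra.
  - destruct (list_bound F) as [R0 [HR0 HF]].
    exists (phiinf R0). split; [|split].
    + intros; apply phiinf_lip; auto.
    + intros t Ht. apply phiinf_zero; auto.
    + intros n0. destruct (Hab 1 ltac:(lra)) as [N1 HN1].
      assert (HK' : ~ freq (fun n => Rabs (a n) <= R0 + 1)) by (intro; apply HK; eexists; eauto).
      unfold freq in HK'. apply not_all_ex_not in HK'. destruct HK' as [N2 HN2].
      exists (n0 + N1 + N2)%nat. split; [lia|].
      apply phiinf_diff; auto.
      assert (Ha : R0 + 1 < Rabs (a (n0 + N1 + N2)%nat)).
      { apply Rnot_le_lt. intro H. apply HN2. exists (n0 + N1 + N2)%nat. split; [lia|exact H]. }
      specialize (HN1 (n0 + N1 + N2)%nat ltac:(lia)).
      revert Ha HN1. generalize (a (n0 + N1 + N2)%nat) (b (n0 + N1 + N2)%nat). intros. crush.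
Qed.

Lemma mol_real (c u v : R) : Cmult (RtoC c) (Cminus (RtoC u) (RtoC v)) = RtoC (c * (u - v)).
Proof. apply injective_projections; simpl; ring. Qed.

Definition wcvg (cplx : bool) {N : Type} (dN : N -> N -> R) (zN : N) (gamma : (N -> C) -> C)
  (p q : nat -> N) (dn : nat -> R) :=
  forall g, Lip0 cplx dN zN g ->
    is_lim_seq (fun n => Cmod (Cminus (Cmult (RtoC (/ dn n)) (Cminus (g (p n)) (g (q n)))) (gamma g))) 0.

Lemma part1_core (cplx : bool) {N : Type} (dN : N -> N -> R) (zN : N) gamma p q dn :
  in_free cplx dN zN gamma -> wcvg cplx dN zN gamma p q dn ->
  (forall eta, 0 < eta -> exists N0, forall n, (N0 <= n)%nat -> dN (p n) (q n) < eta) ->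
  forall G : N -> R, G zN = 0 -> (forall a b, Rabs (G a - G b) <= dN a b) ->
     gamma (fun w => RtoC (G w)) = RtoC 0.
Proof.
  intros Hg Hc Hpq G G0 HG. apply Cmod_small_eq. intros eps He.
  destruct (approx cplx dN zN gamma Hg (eps/2) ltac:(lra)) as [l Hl].
  destruct (phi_exists (0 :: map (fun pr => G (snd pr)) l) (fun n => G (p n)) (fun n => G (q n)))
    as [phi [Hphi [HF Hfr]]].
  { left; reflexivity. }
  { intros eta Heta. destruct (Hpq eta Heta) as [N0 HN]. exists N0. intros n Hn.
    eapply Rle_lt_trans; [apply HG|apply HN, Hn]. }
  assert (Hp0 : phi (G zN) = 0) by (rewrite G0; apply HF; left; reflexivity).
  assert (Hpl : forall a b, Rabs (phi (G a) - phi (G b)) <= dN a b)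
    by (intros; eapply Rle_trans; [apply Hphi|apply HG]).
  destruct (Lip0_real cplx dN zN _ Hp0 Hpl) as [L1 l1].
  destruct (Lip0_real cplx dN zN (fun _ => 0) eq_refl) as [L2 l2].
  { intros; rewrite Rminus_diag, Rabs_R0. apply Rle_trans with (Rabs (G a - G b)); [apply Rabs_pos|apply HG]. }
  destruct (Lip0_real cplx dN zN G G0 HG) as [L3 _].
  specialize (Hl _ _ L1 l1 L2 l2).
  rewrite (gamma_zero cplx dN zN gamma Hg) in Hl.
  assert (E : gamma (fun w => RtoC (phi (G w))) = gamma (fun w => RtoC (G w))).
  { apply (freq_eq_lim _ _ _ _ (Hc _ L1) (Hc _ L3)).
    intros n0. destruct (Hfr n0) as [n [Hn E]]. exists n. split; auto.
    rewrite !mol_real. simpl in E. rewrite E. reflexivity. }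
  rewrite <- E. eapply Rle_trans; [apply Hl|lra].
  intros pr Hpr. rewrite HF. reflexivity. right. apply in_map_iff. exists pr; auto.
Qed.

Lemma part2_core (cplx : bool) {N : Type} (dN : N -> N -> R) (zN : N) gamma p q dn :
  in_free cplx dN zN gamma -> wcvg cplx dN zN gamma p q dn -> (forall n, 0 < dn n) ->
  (forall B, freq (fun n => B < dn n)) ->
  forall G : N -> R, G zN = 0 -> (forall a b, Rabs (G a - G b) <= dN a b) ->
     gamma (fun w => RtoC (G w)) = RtoC 0.
Proof.
  intros Hg Hc Hd Hfr G G0 HG. apply Cmod_small_eq. intros eps He.
  destruct (approx cplx dN zN gamma Hg (eps/2) ltac:(lra)) as [l Hl].
  destruct (list_bound (map (fun pr => G (snd pr)) l)) as [R0 [HR0 HF]].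
  assert (Hp0 : clamp R0 (G zN) = 0) by (rewrite G0; apply clamp_id; rewrite Rabs_R0; lra).
  assert (Hpl : forall a b, Rabs (clamp R0 (G a) - clamp R0 (G b)) <= dN a b)
    by (intros; eapply Rle_trans; [apply clamp_lip; auto|apply HG]).
  destruct (Lip0_real cplx dN zN _ Hp0 Hpl) as [L1 l1].
  destruct (Lip0_real cplx dN zN G G0 HG) as [L3 l3].
  specialize (Hl _ _ L3 l3 L1 l1).
  assert (E : gamma (fun w => RtoC (clamp R0 (G w))) = RtoC 0).
  { apply (freq_small_lim _ _ (Hc _ L1)). intros eta Heta n0.
    destruct (Hfr (2 * R0 / eta) n0) as [n [Hn Hb]]. exists n. split; auto.
    rewrite mol_real, Cmod_R. specialize (Hd n).
    pose proof (clamp_bound R0 (G (p n)) HR0). pose proof (clamp_bound R0 (G (q n)) HR0).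
    assert (Rabs (clamp R0 (G (p n)) - clamp R0 (G (q n))) <= 2 * R0).
    { eapply Rle_trans; [apply Rabs_triang|]. rewrite Rabs_Ropp. lra. }
    rewrite Rabs_mult, Rabs_inv, (Rabs_pos_eq (dn n)) by lra.
    assert (2 * R0 < eta * dn n).
    { apply (Rmult_lt_compat_l eta) in Hb; [|lra]. unfold Rdiv in Hb.
      replace (eta * (2 * R0 * / eta)) with (2 * R0) in Hb by (field; lra). lra. }
    apply (Rmult_lt_reg_l (dn n)); [lra|]. rewrite <- Rmult_assoc, Rinv_r, Rmult_1_l by lra. nra. }
  rewrite E in Hl. eapply Rle_trans; [apply Hl|lra].
  intros pr Hpr. rewrite clamp_id. reflexivity. apply HF. apply in_map_iff. exists pr; auto.
Qed.

Lemma met_refl {N} (d : N -> N -> R) : is_metric d -> forall a, d a a = 0.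
Proof. intros [H _] a. apply H. reflexivity. Qed.
Lemma met_sym {N} (d : N -> N -> R) : is_metric d -> forall a b, d a b = d b a.
Proof. intros [_ [H _]]. exact H. Qed.
Lemma met_tri {N} (d : N -> N -> R) : is_metric d -> forall a b c, d a c <= d a b + d b c.
Proof. intros [_ [_ H]]. exact H. Qed.
Lemma met_pos {N} (d : N -> N -> R) : is_metric d -> forall a b, 0 <= d a b.
Proof. intros hm a b. pose proof (met_tri d hm a b a). rewrite met_refl in H by auto.
  rewrite (met_sym d hm b a) in H. lra. Qed.

Definition bump {N} (d : N -> N -> R) (w : nat -> N) (rho : R) (j : nat) (z : N) : R :=
  Rmax 0 (rho - d z (w j)).

Fixpoint Ssum {N} (d : N -> N -> R) (w : nat -> N) (rho : R) (e : nat -> R) (K : nat) (z : N) : R :=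
  match K with O => 0 | S K => Ssum d w rho e K z + e K * bump d w rho K z end.

Definition hfun {N} (d : N -> N -> R) (w : nat -> N) (rho : R) (e : nat -> R) (z : N) : R :=
  match excluded_middle_informative (exists j, d z (w j) < rho) with
  | left _ => let j := epsilon (inhabits 0%nat) (fun j => d z (w j) < rho) in e j * bump d w rho j z
  | right _ => 0 end.

Lemma bump_out {N} d (w : nat -> N) rho j z : rho <= d z (w j) -> bump d w rho j z = 0.
Proof. intros H. unfold bump, Rmax. destruct Rle_dec; lra. Qed.

Lemma bump_lip {N} (d : N -> N -> R) w rho j a b : is_metric d ->
  Rabs (bump d w rho j a - bump d w rho j b) <= d a b.
Proof.
  intros hm. unfold bump. pose proof (met_tri d hm a b (w j)). pose proof (met_tri d hm b a (w j)).
  rewrite (met_sym d hm b a) in H0. unfold Rmax, Rabs; repeat (destruct Rle_dec || destruct Rcase_abs); lra.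
Qed.

Lemma bump_nonneg {N} d (w : nat -> N) rho j z : 0 <= bump d w rho j z.
Proof. unfold bump; apply Rmax_l. Qed.

Definition disj {N} (d : N -> N -> R) (w : nat -> N) (rho : R) :=
  forall i j z, i <> j -> d z (w i) < rho -> d z (w j) < rho -> False.

Lemma hfun_ball {N} d (w : nat -> N) rho e j z : disj d w rho -> d z (w j) < rho ->
  hfun d w rho e z = e j * bump d w rho j z.
Proof.
  intros Hd Hj. unfold hfun. destruct excluded_middle_informative as [H|H].
  - simpl. set (i := epsilon _ _).
    assert (Hi : d z (w i) < rho) by (apply (epsilon_spec (inhabits 0%nat) (fun j => d z (w j) < rho)); exact H).
    destruct (Nat.eq_dec i j) as [->|ne]; [reflexivity|]. exfalso; eapply Hd; eauto.
  - exfalso; apply H; eauto.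
Qed.

Lemma hfun_out {N} d (w : nat -> N) rho e z : (forall j, rho <= d z (w j)) -> hfun d w rho e z = 0.
Proof.
  intros H. unfold hfun. destruct excluded_middle_informative as [[j Hj]|_]; [|reflexivity].
  specialize (H j). lra.
Qed.

Lemma Ssum_zero {N} d (w : nat -> N) rho e K z : (forall i, (i < K)%nat -> rho <= d z (w i)) ->
  Ssum d w rho e K z = 0.
Proof.
  induction K; intros H; simpl. reflexivity.
  rewrite IHK by (intros; apply H; lia). rewrite bump_out by (apply H; lia). ring.
Qed.

Lemma Ssum_ball {N} d (w : nat -> N) rho e K j z : disj d w rho -> (j < K)%nat -> d z (w j) < rho ->
  Ssum d w rho e K z = e j * bump d w rho j z.
Proof.
  intros Hd. induction K; intros HjK Hj. lia. simpl.
  destruct (Nat.eq_dec j K) as [->|ne].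
  - rewrite Ssum_zero. ring. intros i Hi. apply Rnot_lt_le. intro Hc. eapply (Hd i K z); eauto; lia.
  - rewrite IHK by (auto; lia). rewrite (bump_out d w rho K z). ring.
    apply Rnot_lt_le. intro Hc. eapply (Hd j K z); eauto.
Qed.

Lemma hfun_Ssum {N} d (w : nat -> N) rho e K z : disj d w rho ->
  (forall j, (K <= j)%nat -> rho <= d z (w j)) -> hfun d w rho e z = Ssum d w rho e K z.
Proof.
  intros Hd H. destruct (classic (exists j, d z (w j) < rho)) as [[j Hj]|Hn].
  - assert (j < K)%nat. { destruct (Nat.lt_ge_cases j K); auto. specialize (H j H0). lra. }
    rewrite (hfun_ball _ _ _ _ j) by auto. rewrite (Ssum_ball _ _ _ _ _ j) by auto. reflexivity.
  - rewrite hfun_out, Ssum_zero; auto; intros; apply Rnot_lt_le; intro; apply Hn; eauto.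
Qed.

Lemma hfun_lip {N} d (w : nat -> N) rho e a b : is_metric d -> disj d w rho ->
  (forall j, Rabs (e j) = 1) -> Rabs (hfun d w rho e a - hfun d w rho e b) <= 2 * d a b.
Proof.
  intros hm Hd He. pose proof (met_pos d hm a b) as Hab.
  assert (Hbj : forall j, Rabs (e j * bump d w rho j a - e j * bump d w rho j b) <= d a b).
  { intros j. rewrite <- Rmult_minus_distr_l, Rabs_mult, He, Rmult_1_l. apply bump_lip; auto. }
  assert (Hb1 : forall j z, Rabs (e j * bump d w rho j z) = bump d w rho j z).
  { intros j z. rewrite Rabs_mult, He, Rmult_1_l. apply Rabs_pos_eq, bump_nonneg. }
  destruct (classic (exists j, d a (w j) < rho)) as [[j Hj]|Ha];
  destruct (classic (exists i, d b (w i) < rho)) as [[i Hi]|Hb].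
  - rewrite (hfun_ball _ _ _ _ j a), (hfun_ball _ _ _ _ i b) by auto.
    destruct (Nat.eq_dec i j) as [->|ne]. specialize (Hbj j); lra.
    assert (E1 : bump d w rho j b = 0) by (apply bump_out; apply Rnot_lt_le; intro; eapply (Hd i j b); eauto).
    assert (E2 : bump d w rho i a = 0) by (apply bump_out; apply Rnot_lt_le; intro; eapply (Hd i j a); eauto).
    pose proof (bump_lip d w rho j a b hm). pose proof (bump_lip d w rho i a b hm).
    rewrite E1 in H. rewrite E2 in H0.
    eapply Rle_trans. apply Rabs_triang. rewrite Rabs_Ropp, !Hb1.
    rewrite Rminus_0_r in H. rewrite Rminus_0_l, Rabs_Ropp in H0.
    pose proof (bump_nonneg d w rho j a). pose proof (bump_nonneg d w rho i b).
    rewrite Rabs_pos_eq in H, H0 by auto. lra.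
  - rewrite (hfun_ball _ _ _ _ j a), hfun_out by (auto; intros; apply Rnot_lt_le; intro; apply Hb; eauto).
    assert (E1 : bump d w rho j b = 0) by (apply bump_out; apply Rnot_lt_le; intro; apply Hb; eauto).
    specialize (Hbj j). rewrite E1, Rmult_0_r in Hbj. lra.
  - rewrite hfun_out, (hfun_ball _ _ _ _ i b) by (auto; intros; apply Rnot_lt_le; intro; apply Ha; eauto).
    assert (E1 : bump d w rho i a = 0) by (apply bump_out; apply Rnot_lt_le; intro; apply Ha; eauto).
    specialize (Hbj i). rewrite E1, Rmult_0_r in Hbj. rewrite Rminus_0_l, Rabs_Ropp.
    rewrite Rminus_0_l, Rabs_Ropp in Hbj. lra.
  - rewrite !hfun_out by (intros; apply Rnot_lt_le; intro; eauto).
    rewrite Rminus_0_r, Rabs_R0. lra.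
Qed.

Definition val {N} (d : N -> N -> R) (w : nat -> N) (rho : R) (vv : nat -> N) (sd : nat -> bool)
  (D : nat -> R) (k : nat) (e : nat -> R) (s : R) : R :=
  / D k * (if sd k then s * rho - Ssum d w rho e k (vv k) else Ssum d w rho e k (vv k) - s * rho).

Definition choice {N} (d : N -> N -> R) w rho (vv : nat -> N) sd D (B : R) (k : nat) (e : nat -> R) : R :=
  if Rle_dec (rho / B) (Rabs (val d w rho vv sd D k e 1 - val d w rho vv sd D (pred k) e (e (pred k))))
  then 1 else -1.

Fixpoint epsl {N} (d : N -> N -> R) w rho (vv : nat -> N) sd D B (k : nat) : nat -> R :=
  match k with
  | O => fun _ => 1
  | S k' => fun i => if Nat.eq_dec i k' then choice d w rho vv sd D B k' (epsl d w rho vv sd D B k')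
                     else epsl d w rho vv sd D B k' i
  end.

Definition sgn {N} (d : N -> N -> R) w rho (vv : nat -> N) sd D B (i : nat) : R :=
  epsl d w rho vv sd D B (S i) i.

Lemma Ssum_ext {N} d (w : nat -> N) rho e e' K z : (forall i, (i < K)%nat -> e i = e' i) ->
  Ssum d w rho e K z = Ssum d w rho e' K z.
Proof. induction K; intros H; simpl; auto. rewrite IHK, H by (auto; lia). reflexivity. Qed.

Lemma val_ext {N} d (w : nat -> N) rho vv sd D k e e' s : (forall i, (i < k)%nat -> e i = e' i) ->
  val d w rho vv sd D k e s = val d w rho vv sd D k e' s.
Proof. intros H. unfold val. rewrite (Ssum_ext _ _ _ e e') by auto. reflexivity. Qed.

Lemma epsl_agree {N} d (w : nat -> N) rho vv sd D B k i : (i < k)%nat ->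
  epsl d w rho vv sd D B k i = sgn d w rho vv sd D B i.
Proof.
  revert i. induction k; intros i Hi. lia. simpl.
  destruct (Nat.eq_dec i k) as [->|ne]. unfold sgn. simpl. destruct (Nat.eq_dec k k); [reflexivity|congruence].
  apply IHk. lia.
Qed.

Lemma sgn_pm {N} d (w : nat -> N) rho vv sd D B i : Rabs (sgn d w rho vv sd D B i) = 1.
Proof.
  unfold sgn. simpl. destruct (Nat.eq_dec i i); [|congruence]. unfold choice.
  destruct Rle_dec; unfold Rabs; destruct Rcase_abs; lra.
Qed.

Lemma sgn_top {N} d (w : nat -> N) rho vv sd D B k :
  sgn d w rho vv sd D B k = choice d w rho vv sd D B k (epsl d w rho vv sd D B k).
Proof. unfold sgn. simpl. destruct (Nat.eq_dec k k); [reflexivity|congruence]. Qed.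

Lemma sgn_step {N} d (w : nat -> N) rho vv sd D B k : 0 < rho -> 0 < D (S k) -> D (S k) <= B ->
  let e := sgn d w rho vv sd D B in
  rho / B <= Rabs (val d w rho vv sd D (S k) e (e (S k)) - val d w rho vv sd D k e (e k)).
Proof.
  intros Hr HD HB e.
  assert (Ee : e (S k) = choice d w rho vv sd D B (S k) (epsl d w rho vv sd D B (S k))).
  { unfold e. apply sgn_top. }
  assert (Ag : forall i, (i < S k)%nat -> epsl d w rho vv sd D B (S k) i = e i)
    by (intros; apply epsl_agree; auto).
  unfold choice in Ee. simpl pred in Ee.
  rewrite (val_ext _ _ _ _ _ _ (S k) _ e) in Ee by auto.
  rewrite (val_ext _ _ _ _ _ _ k _ e) in Ee by (intros; apply Ag; lia).
  rewrite (Ag k) in Ee by lia.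
  assert (Hdiff : Rabs (val d w rho vv sd D (S k) e 1 - val d w rho vv sd D (S k) e (-1)) = 2 * rho / D (S k)).
  { unfold val. destruct (sd (S k)).
    - replace (/ D (S k) * (1 * rho - Ssum d w rho e (S k) (vv (S k))) -
               / D (S k) * (-1 * rho - Ssum d w rho e (S k) (vv (S k)))) with (2 * rho / D (S k)) by (field; lra).
      apply Rabs_pos_eq. apply Rlt_le. apply Rdiv_lt_0_compat; lra.
    - replace (/ D (S k) * (Ssum d w rho e (S k) (vv (S k)) - 1 * rho) -
               / D (S k) * (Ssum d w rho e (S k) (vv (S k)) - -1 * rho)) with (- (2 * rho / D (S k))) by (field; lra).
      rewrite Rabs_Ropp. apply Rabs_pos_eq. apply Rlt_le. apply Rdiv_lt_0_compat; lra. }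
  assert (Hb : 2 * (rho / B) <= 2 * rho / D (S k)).
  { unfold Rdiv. rewrite <- Rmult_assoc. apply Rmult_le_compat_l; [lra|]. apply Rinv_le_contravar; lra. }
  destruct Rle_dec as [H|H]; rewrite Ee; [exact H|].
  apply Rnot_le_lt in H.
  set (a := val d w rho vv sd D (S k) e 1) in *. set (b := val d w rho vv sd D (S k) e (-1)) in *.
  set (c := val d w rho vv sd D k e (e k)) in *.
  pose proof (Rabs_triang (a - c) (c - b)). replace (a - c + (c - b)) with (a - b) in H0 by ring.
  rewrite (Rabs_minus_sym c b) in H0. lra.
Qed.

Lemma caseB (cplx : bool) {N : Type} (dN : N -> N -> R) (zN : N) gamma p q dn
  (hN : is_metric dN) (Hc : wcvg cplx dN zN gamma p q dn) (alpha B beta r : R) (n1 : nat)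
  (Ha : 0 < alpha) (Hd : forall n, alpha <= dn n <= B) (Hb : 0 < beta)
  (Hpq : forall n, (n1 <= n)%nat -> beta <= dN (p n) (q n)) (Hr : 0 < r)
  (Hfar : forall Z : list N, freq (fun n => (forall z, In z Z -> r <= dN (p n) z) \/
                                            (forall z, In z Z -> r <= dN (q n) z))) : False.
Proof.
  pose (farP := fun (Z : list N) n => (forall z, In z Z -> r <= dN (p n) z) \/
                                       (forall z, In z Z -> r <= dN (q n) z)).
  pose (nx := fun Z m => epsilon (inhabits 0%nat) (fun n => (m <= n)%nat /\ farP Z n)).
  assert (Hnx : forall Z m, (m <= nx Z m)%nat /\ farP Z (nx Z m)).
  { intros Z m. apply (epsilon_spec (inhabits 0%nat) (fun n => (m <= n)%nat /\ farP Z n)).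
    destruct (Hfar Z m) as [n Hn]. exists n. exact Hn. }
  pose (st := fix st (k : nat) : list N * nat := match k with
     | O => (zN :: nil, n1)
     | S k => let n := nx (fst (st k)) (snd (st k)) in (p n :: q n :: fst (st k), S n) end).
  pose (Zk := fun k => fst (st k)). pose (mk := fun k => snd (st k)).
  pose (nk := fun k => nx (Zk k) (mk k)).
  assert (EZ : forall k, Zk (S k) = p (nk k) :: q (nk k) :: Zk k) by reflexivity.
  assert (Em : forall k, mk (S k) = S (nk k)) by reflexivity.
  assert (Hmn : forall k, (mk k <= nk k)%nat) by (intros; apply Hnx).
  assert (Hfk : forall k, farP (Zk k) (nk k)) by (intros; apply Hnx).
  assert (Hn1 : forall k, (n1 <= mk k)%nat /\ (k <= mk k)%nat).
  { induction k. unfold mk, st; simpl; split; lia. rewrite Em. pose proof (Hmn k). lia. }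
  assert (Hnk : forall k, (n1 <= nk k)%nat /\ (k <= nk k)%nat).
  { intros k. pose proof (Hmn k). pose proof (Hn1 k). lia. }
  assert (HnS : forall k, (nk k < nk (S k))%nat).
  { intros k. pose proof (Hmn (S k)). rewrite Em in H. lia. }
  assert (Hsub : forall k k' z, (k <= k')%nat -> In z (Zk k) -> In z (Zk k')).
  { intros k k' z H. induction H; auto. intros Hz. rewrite EZ. right; right; auto. }
  assert (HzN : forall k, In zN (Zk k)).
  { intros k. apply (Hsub 0%nat). lia. left; reflexivity. }
  assert (Hpj : forall j k, (j < k)%nat -> In (p (nk j)) (Zk k) /\ In (q (nk j)) (Zk k)).
  { intros j k H. split; apply (Hsub (S j)); auto; rewrite EZ; simpl; auto. }
  pose (side := fun k => if excluded_middle_informative (forall z, In z (Zk k) -> r <= dN (p (nk k)) z)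
                         then true else false).
  pose (w := fun k => if side k then p (nk k) else q (nk k)).
  pose (vv := fun k => if side k then q (nk k) else p (nk k)).
  assert (Hw : forall k z, In z (Zk k) -> r <= dN (w k) z).
  { intros k. unfold w, side. destruct excluded_middle_informative as [H|H]; auto.
    destruct (Hfk k) as [H'|H']; [contradiction|exact H']. }
  assert (Hwv : forall k, beta <= dN (vv k) (w k)).
  { intros k. unfold vv, w. destruct (side k).
    rewrite (met_sym dN hN). apply Hpq, Hnk. apply Hpq, Hnk. }
  assert (Hwvj : forall j k, (j < k)%nat -> r <= dN (w k) (w j) /\ r <= dN (w k) (vv j)).
  { intros j k H. destruct (Hpj j k H). unfold vv at 1. unfold w at 2.
    split; destruct (side j); apply Hw; auto. }
  pose (rho := Rmin (r/2) (beta/2)).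
  assert (Hrho : 0 < rho /\ rho <= r/2 /\ rho <= beta/2).
  { unfold rho. split; [apply Rmin_glb_lt; lra|split; [apply Rmin_l|apply Rmin_r]]. }
  assert (Hdisj : disj dN w rho).
  { intros i j z ne Hi Hj.
    assert (Hij : r <= dN (w i) (w j)).
    { destruct (proj1 (Nat.lt_gt_cases i j) ne) as [h|h]; [|apply Hwvj; lia].
      rewrite met_sym by auto. apply Hwvj; lia. }
    pose proof (met_tri dN hN (w i) z (w j)). rewrite (met_sym dN hN (w i) z) in H. lra. }
  pose (D := fun k => dn (nk k)).
  pose (e := sgn dN w rho vv side D B).
  pose (h := hfun dN w rho e).
  assert (HL : Lip0 cplx dN zN (fun z => RtoC (h z))).
  { split; [|split].
    - intros; right; reflexivity.
    - exists 2. intros a b. rewrite Cmod_RtoC_minus. apply hfun_lip; auto.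
      intros; apply sgn_pm.
    - unfold h. rewrite hfun_out. reflexivity. intros j. rewrite met_sym by auto.
      pose proof (Hw j zN (HzN j)). lra. }
  assert (Hval : forall k, Cmult (RtoC (/ dn (nk k))) (Cminus (RtoC (h (p (nk k)))) (RtoC (h (q (nk k)))))
                       = RtoC (val dN w rho vv side D k e (e k))).
  { intros k. rewrite mol_real. f_equal.
    assert (Hhw : h (w k) = e k * rho).
    { unfold h. rewrite (hfun_ball _ _ _ _ k) by (auto; rewrite met_refl by auto; lra).
      unfold bump. rewrite met_refl by auto. rewrite Rminus_0_r, Rmax_right by lra. reflexivity. }
    assert (Hhv : h (vv k) = Ssum dN w rho e k (vv k)).
    { unfold h. apply hfun_Ssum; auto. intros j Hj. destruct (Nat.eq_dec j k) as [->|ne].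
      pose proof (Hwv k). lra. rewrite met_sym by auto. destruct (Hwvj k j) as [_ H]; [lia|]. lra. }
    unfold val, D. destruct (side k) eqn:Es.
    - assert (E1 : w k = p (nk k)) by (unfold w; rewrite Es; reflexivity).
      assert (E2 : vv k = q (nk k)) by (unfold vv; rewrite Es; reflexivity).
      rewrite <- E1, <- E2, Hhw, Hhv. reflexivity.
    - assert (E1 : w k = q (nk k)) by (unfold w; rewrite Es; reflexivity).
      assert (E2 : vv k = p (nk k)) by (unfold vv; rewrite Es; reflexivity).
      rewrite <- E1, <- E2, Hhw, Hhv. reflexivity. }
  assert (HBp : 0 < B) by (specialize (Hd 0%nat); lra).
  destruct (cvC _ _ (Hc _ HL) (rho / B / 3)) as [N0 HN0].
  { apply Rdiv_lt_0_compat; [apply Rdiv_lt_0_compat|]; lra. }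
  pose proof (HN0 (nk N0) ltac:(pose proof (Hnk N0); lia)) as H1.
  pose proof (HN0 (nk (S N0)) ltac:(pose proof (Hnk (S N0)); lia)) as H2.
  simpl in H1, H2. rewrite Hval in H1, H2.
  pose proof (sgn_step dN w rho vv side D B N0 ltac:(lra) ltac:(unfold D; specialize (Hd (nk (S N0))); lra)
    ltac:(unfold D; apply Hd)) as Hs. simpl in Hs. fold e in Hs.
  pose proof (Cmod_sub_tri (RtoC (val dN w rho vv side D (S N0) e (e (S N0))))
     (RtoC (val dN w rho vv side D N0 e (e N0))) (gamma (fun z => RtoC (h z)))) as T.
  rewrite Cmod_RtoC_minus in T. rewrite (Cmod_sub_sym (gamma _)) in T. fold h in H1, H2.
  assert (rho / B / 3 > 0) by (apply Rdiv_lt_0_compat; [apply Rdiv_lt_0_compat|]; lra).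
  lra.
Qed.

Lemma pigeon {N} (Z : list N) : forall (A : nat -> Prop) (Bp : N -> nat -> Prop), freq A ->
  (forall n, A n -> exists z, In z Z /\ Bp z n) -> exists z, In z Z /\ freq (fun n => A n /\ Bp z n).
Proof.
  induction Z as [|a Z IH]; intros A Bp HA HC.
  - destruct (HA 0%nat) as [n [_ Hn]]. destruct (HC n Hn) as [z [[] _]].
  - destruct (classic (freq (fun n => A n /\ Bp a n))) as [Hf|Hf].
    + exists a. split; [left; reflexivity|exact Hf].
    + unfold freq in Hf. apply not_all_ex_not in Hf. destruct Hf as [n0 Hn0].
      destruct (IH (fun n => A n /\ ~ Bp a n) Bp) as [z [Hz Hfz]].
      * intros m. destruct (HA (m + n0)%nat) as [n [Hn An]]. exists n. split; [lia|]. split; auto.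
        intro Hb. apply Hn0. exists n. split; [lia|auto].
      * intros n [An Hb]. destruct (HC n An) as [z [[<-|Hz] Hbz]]; [contradiction|]. eauto.
      * exists z. split; [right; exact Hz|]. intros m. destruct (Hfz m) as [n [Hn [[An _] Hb]]]. eauto.
Qed.

Definition rk (k : nat) : R := / INR (S k).
Lemma rk_pos k : 0 < rk k.
Proof. unfold rk. apply Rinv_0_lt_compat, lt_0_INR. lia. Qed.
Lemma rk_le j k : (j <= k)%nat -> rk k <= rk j.
Proof. intros H. unfold rk. apply Rinv_le_contravar. apply lt_0_INR; lia. apply le_INR; lia. Qed.
Lemma rk_small e : 0 < e -> exists K, rk K < e.
Proof.
  intros He. destruct (archimed_cor1 e He) as [M [HM HM0]]. exists (M - 1)%nat. unfold rk.
  replace (S (M - 1)) with M by lia. exact HM.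
Qed.

Lemma caseA {N} (dN : N -> N -> R) (hN : is_metric dN) (hcN : complete_metric dN) (p q : nat -> N) :
  (forall r, 0 < r -> exists Z : list N, eventually (fun n =>
     (exists z, In z Z /\ dN (p n) z < r) /\ (exists z, In z Z /\ dN (q n) z < r))) ->
  exists P Q : N, forall eps, 0 < eps -> forall n0, exists n, (n0 <= n)%nat /\
      dN (p n) P < eps /\ dN (q n) Q < eps.
Proof.
  intros HZ.
  pose (ball := fun (c : N * N) k n => dN (p n) (fst c) < rk k /\ dN (q n) (snd c) < rk k).
  assert (Step : forall (A : nat -> Prop) k, freq A -> exists c, freq (fun n => A n /\ ball c k n)).
  { intros A k HA. destruct (HZ (rk k) (rk_pos k)) as [Z [N0 HN0]].
    destruct (pigeon (list_prod Z Z) (fun n => A n /\ (N0 <= n)%nat) (fun c => ball c k)) as [c [_ Hc]].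
    - intros m. destruct (HA (m + N0)%nat) as [n [Hn An]]. exists n. split; [lia|split; auto; lia].
    - intros n [An Hn]. destruct (HN0 n Hn) as [[z1 [H1 D1]] [z2 [H2 D2]]].
      exists (z1, z2). split. apply in_prod; auto. split; auto.
    - exists c. intros m. destruct (Hc m) as [n [Hn [[An _] Hb]]]. eauto. }
  pose (inh := inhabits (p 0%nat, p 0%nat)).
  pose (st := fix st (k : nat) : (N * N) * (nat -> Prop) := match k with
    | O => ((p 0%nat, p 0%nat), fun _ => True)
    | S k => let c := epsilon inh (fun c => freq (fun n => snd (st k) n /\ ball c k n)) in
             (c, fun n => snd (st k) n /\ ball c k n) end).
  pose (A := fun k => snd (st k)). pose (c := fun k => fst (st (S k))).
  assert (EA : forall k n, A (S k) n = (A k n /\ ball (c k) k n)) by reflexivity.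
  assert (HA : forall k, freq (A k)).
  { induction k.
    - intros m. exists m. split; [lia|]. unfold A, st; simpl; exact I.
    - intros m. destruct (epsilon_spec inh (fun c => freq (fun n => A k n /\ ball c k n)) (Step _ k IHk) m)
        as [n [Hn Hb]]. exists n. split; auto. }
  assert (HB : forall j k n, (j <= k)%nat -> A (S k) n -> ball (c j) j n).
  { intros j k n H. induction H; intros Ha; rewrite EA in Ha; destruct Ha as [Ha Hb]; auto. }
  assert (Cau : forall j k, dN (fst (c j)) (fst (c k)) < rk j + rk k /\ dN (snd (c j)) (snd (c k)) < rk j + rk k).
  { intros j k. destruct (HA (S (Nat.max j k)) 0%nat) as [n [_ Hn]].
    destruct (HB j _ n (Nat.le_max_l j k) Hn) as [H1 H2].
    destruct (HB k _ n (Nat.le_max_r j k) Hn) as [H3 H4].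
    pose proof (met_tri dN hN (fst (c j)) (p n) (fst (c k))).
    pose proof (met_tri dN hN (snd (c j)) (q n) (snd (c k))).
    rewrite (met_sym dN hN (fst (c j)) (p n)) in H. rewrite (met_sym dN hN (snd (c j)) (q n)) in H0. split; lra. }
  assert (Cau' : forall (u : nat -> N), (forall j k, dN (u j) (u k) < rk j + rk k) ->
     exists l, is_lim_seq (fun n => dN (u n) l) 0).
  { intros u Hu. apply hcN. intros eps He. destruct (rk_small (eps/2)) as [K HK]; [lra|].
    exists K. intros m n Hm Hn. pose proof (Hu m n). pose proof (rk_le K m Hm). pose proof (rk_le K n Hn). lra. }
  destruct (Cau' (fun k => fst (c k))) as [P HP]; [intros; apply Cau|].
  destruct (Cau' (fun k => snd (c k))) as [Q HQ]; [intros; apply Cau|].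
  exists P, Q. intros eps He n0.
  apply is_lim_seq_spec in HP. apply is_lim_seq_spec in HQ.
  destruct (HP (mkposreal (eps/2) ltac:(lra))) as [K1 HK1].
  destruct (HQ (mkposreal (eps/2) ltac:(lra))) as [K2 HK2].
  destruct (rk_small (eps/2)) as [K3 HK3]; [lra|].
  set (k := (K1 + K2 + K3)%nat).
  destruct (HA (S k) n0) as [n [Hn Ha]]. exists n. split; auto.
  destruct (HB k k n (le_n k) Ha) as [B1 B2].
  specialize (HK1 k ltac:(unfold k; lia)). specialize (HK2 k ltac:(unfold k; lia)). simpl in HK1, HK2.
  rewrite Rminus_0_r in HK1, HK2.
  pose proof (rk_le K3 k ltac:(unfold k; lia)).
  pose proof (met_tri dN hN (p n) (fst (c k)) P). pose proof (met_tri dN hN (q n) (snd (c k)) Q).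
  pose proof (Rle_abs (dN (fst (c k)) P)). pose proof (Rle_abs (dN (snd (c k)) Q)).
  split; lra.
Qed.

Lemma fin_bound (u : nat -> R) n0 : exists C, forall n, (n < n0)%nat -> u n <= C.
Proof.
  induction n0. exists 0. intros; lia.
  destruct IHn0 as [C HC]. exists (Rmax C (u n0)). intros n Hn.
  destruct (Nat.eq_dec n n0) as [->|ne]. apply Rmax_r.
  eapply Rle_trans; [apply HC; lia|apply Rmax_l].
Qed.

Theorem lemma2p3 (cplx : bool)
  (M : Type) (dM : M -> M -> R) (zM : M)
  (N : Type) (dN : N -> N -> R) (zN : N)
  (hM : is_metric dM) (hcM : complete_metric dM)
  (hN : is_metric dN) (hcN : complete_metric dN)
  (f : M -> N) (hf : lipschitz_map dM dN f) (hf0 : f zM = zN)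
  (x y : nat -> M) (hxy : forall n, x n <> y n)
  (gamma : (N -> C) -> C) (hgamma : in_free cplx dN zN gamma)
  (hcvg : weak_cvg cplx dN zN (fun n => molecule dM f (x n) (y n)) gamma) :
  (is_lim_seq (fun n => dM (x n) (y n)) 0 -> free_zero cplx dN zN gamma) /\
  (is_lim_seq (fun n => dM (x n) (y n)) p_infty -> free_zero cplx dN zN gamma) /\
  ((exists alpha, 0 < alpha /\ forall n, alpha <= dM (x n) (y n)) ->
   ~ free_zero cplx dN zN gamma ->
   (exists B, forall n, dM (x n) (y n) <= B) /\
   (exists p q : N, forall eps, 0 < eps -> forall n0, exists n, (n0 <= n)%nat /\
      dN (f (x n)) p < eps /\ dN (f (y n)) q < eps)).
Proof.
  set (p := fun n => f (x n)). set (q := fun n => f (y n)). set (dn := fun n => dM (x n) (y n)).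
  assert (Hc : wcvg cplx dN zN gamma p q dn) by exact hcvg.
  assert (Hdpos : forall n, 0 < dn n).
  { intros n. unfold dn. destruct (Rle_lt_or_eq_dec 0 (dM (x n) (y n)) (met_pos dM hM _ _)) as [h|h]; auto.
    exfalso. apply (hxy n). apply hM. auto. }
  pose proof (met_pos dN hN) as HdN.
  destruct hf as [L HL].
  assert (Part2 : (forall B, freq (fun n => B < dn n)) -> free_zero cplx dN zN gamma).
  { intros Hfr. apply reduce; auto. apply (part2_core cplx dN zN gamma p q dn hgamma Hc Hdpos Hfr). }
  split; [|split].
  - intros Hl. apply reduce; auto. apply (part1_core cplx dN zN gamma p q dn hgamma Hc).
    intros eta Heta. apply is_lim_seq_spec in Hl.
    assert (HL' : 0 < Rabs L + 1) by (pose proof (Rabs_pos L); lra).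
    destruct (Hl (mkposreal (eta / (Rabs L + 1)) ltac:(apply Rdiv_lt_0_compat; lra))) as [N0 HN0].
    exists N0. intros n Hn. specialize (HN0 n Hn). simpl in HN0. rewrite Rminus_0_r in HN0.
    pose proof (Hdpos n). rewrite Rabs_pos_eq in HN0 by lra.
    apply (Rmult_lt_compat_l (Rabs L + 1)) in HN0; [|lra].
    replace ((Rabs L + 1) * (eta / (Rabs L + 1))) with eta in HN0 by (field; lra).
    pose proof (HL (x n) (y n)). pose proof (Rle_abs L).
    unfold p, q, dn in *. assert (L * dM (x n) (y n) <= (Rabs L + 1) * dM (x n) (y n)) by (apply Rmult_le_compat_r; lra). lra.
  - intros Hl. apply Part2. intros B0 n0. apply is_lim_seq_spec in Hl. destruct (Hl B0) as [N0 HN0].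
    exists (n0 + N0)%nat. split; [lia|]. apply HN0; lia.
  - intros [alpha [Ha Hal]] Hnz.
    assert (HBd : exists B, forall n, dM (x n) (y n) <= B).
    { apply NNPP. intros Hnb. apply Hnz. apply Part2. intros B0 n0.
      apply NNPP. intros Hnf. apply Hnb.
      destruct (fin_bound dn n0) as [C HC]. exists (Rmax B0 C). intros n.
      destruct (Nat.lt_ge_cases n n0) as [h|h].
      - eapply Rle_trans; [apply (HC n h)|apply Rmax_r].
      - eapply Rle_trans; [|apply Rmax_l]. apply Rnot_lt_le. intro Hlt. apply Hnf. exists n. auto. }
    split; [exact HBd|]. destruct HBd as [B HB].
    assert (Hg : exists g, Lip0 cplx dN zN g /\ gamma g <> RtoC 0).
    { apply NNPP. intro H. apply Hnz. intros g Hg. apply NNPP. intro H'. apply H. eauto. }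
    destruct Hg as [g [Hg Hgne]].
    assert (Hcg : 0 < Cmod (gamma g)).
    { destruct (Rle_lt_or_eq_dec 0 _ (Cmod_ge_0 (gamma g))) as [h|h]; auto.
      exfalso. apply Hgne. apply Cmod_eq_0. auto. }
    destruct Hg as [HK [[Lg HLg] Hg0]].
    set (Lg' := Rabs Lg + 1). assert (HLg' : 0 < Lg') by (unfold Lg'; pose proof (Rabs_pos Lg); lra).
    destruct (cvC _ _ (Hc g (conj HK (conj (ex_intro _ Lg HLg) Hg0))) (Cmod (gamma g) / 2)) as [n1 Hn1]; [lra|].
    set (beta := Cmod (gamma g) * alpha / (2 * Lg')).
    assert (Hbeta : 0 < beta) by (unfold beta; apply Rdiv_lt_0_compat; nra).
    assert (Hpq : forall n, (n1 <= n)%nat -> beta <= dN (p n) (q n)).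
    { intros n Hn. specialize (Hn1 n Hn).
      set (m := Cmult (RtoC (/ dn n)) (Cminus (g (p n)) (g (q n)))) in *.
      pose proof (Cmod_triangle (Cminus (gamma g) m) m) as T.
      replace (Cplus (Cminus (gamma g) m) m) with (gamma g) in T by (unfold Cminus; ring).
      rewrite Cmod_sub_sym in T.
      assert (Hm : Cmod m <= / dn n * (Lg' * dN (p n) (q n))).
      { unfold m. rewrite Cmod_mult, Cmod_R. pose proof (Hdpos n).
        rewrite Rabs_pos_eq by (apply Rlt_le, Rinv_0_lt_compat; lra).
        apply Rmult_le_compat_l. apply Rlt_le, Rinv_0_lt_compat; lra.
        eapply Rle_trans; [apply HLg|]. apply Rmult_le_compat_r; auto. unfold Lg'.
        pose proof (Rle_abs Lg). lra. }
      pose proof (Hdpos n). pose proof (Hal n). fold dn in H0.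
      assert (Cmod (gamma g) / 2 * dn n < Lg' * dN (p n) (q n)).
      { apply (Rmult_lt_reg_l (/ dn n)). apply Rinv_0_lt_compat; lra.
        replace (/ dn n * (Cmod (gamma g) / 2 * dn n)) with (Cmod (gamma g) / 2) by (field; lra). lra. }
      unfold beta. apply (Rmult_le_reg_l (2 * Lg')); [lra|].
      replace (2 * Lg' * (Cmod (gamma g) * alpha / (2 * Lg'))) with (Cmod (gamma g) * alpha) by (field; lra).
      assert (Cmod (gamma g) * alpha <= Cmod (gamma g) * dn n) by (apply Rmult_le_compat_l; [lra|exact H0]). lra. }
    destruct (classic (forall r, 0 < r -> exists Z : list N, eventually (fun n =>
     (exists z, In z Z /\ dN (p n) z < r) /\ (exists z, In z Z /\ dN (q n) z < r)))) as [HA|HA].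
    + exact (caseA dN hN hcN p q HA).
    + exfalso. apply not_all_ex_not in HA. destruct HA as [r Hr].
      apply imply_to_and in Hr. destruct Hr as [Hr HZ].
      apply (caseB cplx dN zN gamma p q dn hN Hc alpha B beta r n1 Ha); auto.
      intros n; split; [apply Hal|apply HB].
      intros Z n0. apply NNPP. intro Hf. apply HZ. exists Z. exists n0. intros n Hn.
      apply NNPP. intro He. apply Hf. exists n. split; auto.
      apply not_and_or in He. destruct He as [He|He]; [left|right]; intros z Hz;
        apply Rnot_lt_le; intro; apply He; eauto.
Qed.
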